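(* Let $n\ge 0$ and let $\alpha$ be a word of length $2^n$ over $\{0,1\}$. If $i_1^{(n)}i_2^{(n)}\alpha\in\mathcal{L}^*(E_{\mathbb{Z}})$ or $\alpha\, i_1^{(n)}i_2^{(n)}\in\mathcal{L}^*(E_{\mathbb{Z}})$ for some $i_1,i_2\in\{0,1\}$, then $\alpha=i^{(n)}$ for some $i\in\{0,1\}$.
   Context: The two-sided Thue--Morse sequence $\omega=(\omega_k)_{k\in\mathbb{Z}}$ over $\{0,1\}$ is defined by $\omega_0=0$, $\omega_{2^n+j}=1-\omega_j$ for $n\ge0$, $0\le j<2^n$, and $\omega_{-i}=\omega_{i-1}$ for $i\ge1$. $\mathcal{L}^*(E_{\mathbb{Z}})$ denotes the set of finite nonempty words $\omega_m\omega_{m+1}\cdots\omega_n$ ($m\le n$) occurring in $\omega$. Blocks $i^{(n)}$: $0^{(0)}=0$, $1^{(0)}=1$, and inductively $0^{(n)}=0^{(n-1)}1^{(n-1)}$, $1^{(n)}=1^{(n-1)}0^{(n-1)}$ (concatenation); $|i^{(n)}|=2^n$. *)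

(* Defs.v *)
(* Alphabet {0,1} encoded as bool: 0 = false, 1 = true. *)
From mathcomp Require Import all_boot all_order all_algebra.
Set Implicit Arguments. Unset Strict Implicit. Unset Printing Implicit Defensive.

(* One-sided Thue--Morse: omega_0 = 0, omega_(2^n + j) = 1 - omega_j (0 <= j < 2^n).
   For k > 0, write k = 2^n + j with n = trunc_log 2 k, so j = k - 2^n < 2^n.
   Fuel recursion (fuel >= k suffices since j < k). *)
Fixpoint tm_aux (fuel k : nat) : bool :=
  match fuel with
  | 0 => false
  | fuel'.+1 =>
      if k == 0 then false
      else ~~ tm_aux fuel' (k - 2 ^ trunc_log 2 k)
  end.

Definition tm (k : nat) : bool := tm_aux k k.

(* Two-sided Thue--Morse: omega_(-i) = omega_(i-1) for i >= 1.
   Negz n denotes -(n+1), hence omega_(Negz n) = omega_n. *)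
Definition omegaZ (z : int) : bool :=
  match z with
  | Posz n => tm n
  | Negz n => tm n
  end.

Definition inLstar (w : seq bool) : Prop :=
  w != [::] /\
  exists m : int, w = [seq omegaZ (m + (k%:Z))%R | k <- iota 0 (size w)].

Fixpoint block (n : nat) (i : bool) : seq bool :=
  match n with
  | 0 => [:: i]
  | n'.+1 => block n' i ++ block n' (~~ i)
  end.

Goal [seq tm k | k <- iota 0 16] =
  [:: false; true; true; false; true; false; false; true;
      true; false; false; true; false; true; true; false]. by []. Qed.
Goal block 2 false = [:: false; true; true; false]. by []. Qed.

(* Main.v *)
Require Import Defs.
From mathcomp Require Import all_boot all_order all_algebra zify.

Lemma tm_aux_fuel f1 f2 k : k <= f1 -> k <= f2 -> tm_aux f1 k = tm_aux f2 k.
Proof.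
elim: f1 f2 k => [|f1 IH] [|f2] k /= h1 h2 //.
- by have -> : k = 0 by lia.
- by have -> : k = 0 by lia.
case: eqP => // /eqP k0; congr negb; apply: IH.
  have := expn_gt0 2 (trunc_log 2 k); lia.
have := expn_gt0 2 (trunc_log 2 k); lia.
Qed.

Lemma tm_rec k : 0 < k -> tm k = ~~ tm (k - 2 ^ trunc_log 2 k).
Proof.
move=> kp; rewrite /tm; case: k kp => // k _ /=.
congr negb; apply: tm_aux_fuel => //.
have := expn_gt0 2 (trunc_log 2 k.+1); lia.
Qed.

Lemma tl_double k : 0 < k -> trunc_log 2 (2 * k) = (trunc_log 2 k).+1 /\ trunc_log 2 (2*k+1) = (trunc_log 2 k).+1.
Proof.
move=> kp.
have h1 := trunc_logP (isT : 1 < 2) kp. have h2 := trunc_log_ltn k (isT : 1 < 2).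
rewrite expnS in h2.
split; apply: trunc_log_eq => //; rewrite !expnS; apply/andP; split; lia.
Qed.

Lemma tm_2k k : tm (2 * k) = tm k /\ tm (2 * k + 1) = ~~ tm k.
Proof.
elim: k {-2}k (leqnn k) => [|N IH] k hk.
  have -> : k = 0 by lia.
  by rewrite (@tm_rec 1) // trunc_log1.
case: (posnP k) => [->|kp].
  by rewrite (@tm_rec 1) // trunc_log1.
have [d1 d2] := tl_double _ kp.
have h1 := trunc_logP (isT : 1 < 2) kp.
have h0 : 0 < 2 ^ trunc_log 2 k by rewrite expn_gt0.
have [IH1 IH2] := IH (k - 2 ^ trunc_log 2 k) ltac:(lia).
split; rewrite tm_rec ?d1 ?d2; try lia; rewrite expnS.
  by rewrite -mulnBr IH1 [in RHS](@tm_rec k kp).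
have -> : 2 * k + 1 - 2 * 2 ^ trunc_log 2 k = 2 * (k - 2 ^ trunc_log 2 k) + 1 by lia.
by rewrite IH2 [in RHS](@tm_rec k kp).
Qed.

Lemma tm_even k : tm (2 * k) = tm k. Proof. by case: (tm_2k k). Qed.
Lemma tm_odd k : tm (2 * k + 1) = ~~ tm k. Proof. by case: (tm_2k k). Qed.
Lemma tm_2kb k (b : bool) : tm (2 * k + b) = tm k (+) b.
Proof. by case: b; rewrite /= ?addn0 ?tm_even ?tm_odd ?addbT ?addbF. Qed.

Lemma tm_mul x n j : j < 2 ^ n -> tm (x * 2 ^ n + j) = tm x (+) tm j.
Proof.
elim: n x j => [|n IH] x j hj.
  rewrite expn0 in hj; have -> : j = 0 by lia. by rewrite muln1 addn0 addbF.
rewrite -(odd_double_half j) -!muln2.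
have -> : x * 2 ^ n.+1 + (odd j + j./2 * 2) = 2 * (x * 2^n + j./2) + odd j.
  rewrite expnS; lia.
rewrite tm_2kb IH; last by rewrite expnS in hj; have := odd_double_half j; lia.
by rewrite -addbA addnC mulnC tm_2kb.
Qed.

Lemma tm_compl n a : a < 2 ^ n -> tm (2 ^ n - 1 - a) = tm a (+) odd n.
Proof.
elim: n a => [|n IH] a ha.
  rewrite expn0 in ha; have -> : a = 0 by lia. by [].
have hd := odd_double_half a. rewrite -muln2 in hd.
rewrite expnS in ha.
have -> : 2 ^ n.+1 - 1 - a = 2 * (2 ^ n - 1 - a./2) + (~~ odd a).
  rewrite expnS; case: (odd a) hd => /= hd; lia.
rewrite tm_2kb IH; last lia.
rewrite -[in RHS](odd_double_half a) -muln2 mulnC addnC tm_2kb /=.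
by case: (odd a); case: (odd n); case: (tm _).
Qed.
Import GRing.Theory Num.Theory.

Lemma block_map n i : block n i = [seq i (+) tm j | j <- iota 0 (2 ^ n)].
Proof.
elim: n i => [|n IH] i /=; first by rewrite addbF.
rewrite !IH expnS mul2n -addnn iotaD map_cat add0n; congr (_ ++ _).
rewrite -[in iota (2^n) _](addn0 (2^n)) (iotaDl (2^n) 0) -map_comp addn0; apply/eq_in_map => j.
rewrite mem_iota add0n /= => hj.
rewrite -[2^n]mul1n tm_mul // /=.
by case: i; case: (tm j).
Qed.

Lemma size_block n i : size (block n i) = 2 ^ n.
Proof. by rewrite block_map size_map size_iota. Qed.

Lemma nth_block n i j : j < 2 ^ n -> nth false (block n i) j = i (+) tm j.
Proof.
move=> hj; rewrite block_map (nth_map 0) ?size_iota // nth_iota //.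
Qed.

Lemma notriple x : tm x = tm x.+1 -> tm x.+1 = tm x.+2 -> False.
Proof.
have hd := odd_double_half x. rewrite -muln2 mulnC in hd.
case: (boolP (odd x)) => hx.
  have e1 : x.+1 = 2 * (x./2).+1 by move: hd; rewrite hx; lia.
  have e2 : x.+2 = 2 * (x./2).+1 + 1 by move: hd; rewrite hx; lia.
  rewrite e2 e1 tm_even tm_odd => _.
  by case: (tm _).
have e1 : x = 2 * x./2 by move: hd; rewrite (negbTE hx); lia.
have e2 : x.+1 = 2 * x./2 + 1 by move: hd; rewrite (negbTE hx); lia.
rewrite e2 {1}e1 tm_even tm_odd.
by case: (tm _).
Qed.

Lemma sync n : forall m i1 i2,
  (forall j, j < 2 ^ n -> tm (m + j) = i1 (+) tm j) ->
  (forall j, j < 2 ^ n -> tm (m + 2 ^ n + j) = i2 (+) tm j) -> 2 ^ n %| m.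
Proof.
elim: n => [|n IH] m i1 i2 h1 h2; first by rewrite expn0 dvd1n.
have hN : 0 < 2 ^ n by rewrite expn_gt0.
have G : forall p, 2 * p + 1 < 2 * 2 ^ n.+1 -> tm (m + (2 * p + 1)) = ~~ tm (m + 2 * p).
  move=> p hp.
  case: (ltnP (2 * p + 1) (2 ^ n.+1)) => hp2.
    rewrite !h1 ?tm_odd ?tm_even //; last lia.
    by rewrite addbN.
  rewrite expnS in hp hp2.   have e1 : m + (2 * p + 1) = m + 2 ^ n.+1 + (2 * (p - 2 ^ n) + 1) by rewrite expnS; lia.
  have e2 : m + 2 * p = m + 2 ^ n.+1 + (2 * (p - 2 ^ n)) by rewrite expnS; lia.
  rewrite e1 e2 !h2 ?tm_odd ?tm_even; try (rewrite expnS in hp hp2 *; lia).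
  by rewrite addbN.
have meven : ~~ odd m.
  apply/negP => mo.
  have em : m = 2 * m./2 + 1 by have := odd_double_half m; rewrite mo; lia.
  have g0 := G 0 ltac:(rewrite expnS; lia).
  have g1 := G 1 ltac:(rewrite expnS; lia).
  rewrite em in g0 g1.
  have ee : 2 * m./2 + 1 + (2 * 1 + 1) = 2 * (m./2).+2 + 0 by lia. rewrite ee in g1. clear ee.
  have ee : 2 * m./2 + 1 + 2 * 1 = 2 * (m./2).+1 + 1 by lia. rewrite ee in g1. clear ee.
  have ee : 2 * m./2 + 1 + (2 * 0 + 1) = 2 * (m./2).+1 + 0 by lia. rewrite ee in g0. clear ee.
  have ee : 2 * m./2 + 1 + 2 * 0 = 2 * (m./2) + 1 by lia. rewrite ee in g0. clear ee.
  rewrite !addn0 !tm_even !tm_odd in g0 g1.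
  apply: (@notriple (m./2)); first by move: g0; case: (tm _); case: (tm _).
  by move: g1; case: (tm _); case: (tm _).
have em : m = 2 * m./2 by have := odd_double_half m; rewrite (negbTE meven); lia.
rewrite em expnS dvdn_pmul2l //.
apply: (IH _ i1 i2) => j hj.
  by rewrite -tm_even mulnDr -em h1 ?tm_even // expnS; lia.
rewrite -tm_even !mulnDr -em -(expnS 2 n) h2 ?tm_even // expnS; lia.
Qed.

Lemma omega_shift e (z : int) (M : nat) :
  ((6 * 2 ^ (2 * e))%:Z + z = M%:Z)%R ->
  (- (2 ^ (2 * e))%:Z < z < (2 ^ (2 * e))%:Z)%R ->
  omegaZ z = tm M.
Proof.
set E := 2 ^ (2 * e).
case: z => a /= hM /andP [hl hr].
  have -> : M = 6 * E + a by lia.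
  by rewrite tm_mul //; lia.
rewrite NegzE in hM hl hr.
have -> : M = 5 * E + (2 ^ (2 * e) - 1 - a) by rewrite -/E; lia.
rewrite tm_mul; last by rewrite -/E; lia.
rewrite tm_compl; last by rewrite -/E; lia.
by rewrite oddM /= !addbF.
Qed.

Lemma inL_nat (w : seq bool) : inLstar w ->
  exists M : nat, w = [seq tm (M + k) | k <- iota 0 (size w)].
Proof.
move=> [_ [m hw]].
set e := (`|m| + size w)%N.
set E := 2 ^ (2 * e).
have hE : e < E by rewrite /E; apply: leq_trans (ltn_expl _ (isT : 1 < 2)) _; rewrite leq_exp2l //; lia.
have [M hM] : exists M : nat, ((6 * E)%:Z + m = M%:Z)%R.
  exists `|((6 * E)%:Z + m)%R|%N; lia.
exists M; rewrite {1}hw; apply/eq_in_map => k; rewrite mem_iota add0n /= => hk.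
apply: (@omega_shift e); rewrite -/E; first lia.
apply/andP; split; lia.
Qed.

Lemma nth_w (w : seq bool) M p : w = [seq tm (M + k) | k <- iota 0 (size w)] ->
  p < size w -> nth false w p = tm (M + p).
Proof. by move=> hw hp; rewrite hw (nth_map 0) ?size_iota // nth_iota. Qed.

Theorem lemma3p3 (n : nat) (alpha : seq bool) :
  size alpha = 2 ^ n ->
  (exists i1 i2 : bool,
      inLstar (block n i1 ++ block n i2 ++ alpha) \/
      inLstar (alpha ++ block n i1 ++ block n i2)) ->
  exists i : bool, alpha = block n i.
Proof.
move=> hs [i1 [i2 [h|h]]]; have [M hw] := inL_nat _ h;
  have hN : 0 < 2 ^ n by rewrite expn_gt0.
- have hd : 2 ^ n %| M.
    apply: (@sync n _ i1 i2) => j hj.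
      rewrite -(nth_w _ _ _ hw); last by rewrite !size_cat !size_block hs; lia.
      by rewrite nth_cat size_block hj nth_block.
    rewrite -addnA -(nth_w _ _ _ hw); last by rewrite !size_cat !size_block hs; lia.
    by rewrite nth_cat size_block ltnNge leq_addr /= addKn nth_cat size_block hj nth_block.
  case/dvdnP: hd => q hq.
  exists (tm (q + 2)); apply: (@eq_from_nth _ false); first by rewrite size_block.
  move=> j; rewrite hs => hj.
  have := @nth_w _ _ (2 ^ n + (2 ^ n + j)) hw.
  move/(_ ltac:(rewrite !size_cat !size_block hs; lia)).
  rewrite nth_cat size_block ltnNge leq_addr /= addKn.
  rewrite nth_cat size_block ltnNge leq_addr /= addKn => ->.
  rewrite nth_block // -(tm_mul _ _ _ hj) hq; congr tm; lia.
- have hd : 2 ^ n %| M + 2 ^ n.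
    apply: (@sync n _ i1 i2) => j hj.
      rewrite -addnA -(nth_w _ _ _ hw); last by rewrite !size_cat !size_block hs; lia.
      by rewrite nth_cat hs ltnNge leq_addr /= addKn nth_cat size_block hj nth_block.
    rewrite -!addnA -(nth_w _ _ _ hw); last by rewrite !size_cat !size_block hs; lia.
    rewrite nth_cat hs ltnNge leq_addr /= addKn.
    by rewrite nth_cat size_block ltnNge leq_addr /= addKn nth_block.
  case/dvdnP: hd => q hq.
  exists (tm (q - 1)); apply: (@eq_from_nth _ false); first by rewrite size_block.
  move=> j; rewrite hs => hj.
  have := @nth_w _ _ (j) hw.
  move/(_ ltac:(rewrite !size_cat !size_block hs; lia)).
  rewrite nth_cat hs hj => ->.
  rewrite nth_block // -(tm_mul _ _ _ hj); congr tm.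
  have : 0 < q by case: q hq; lia.
  rewrite mulnBl; lia.
Qed.
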